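(* Let $f<0$, $g<0$ and $\rho\in(0,\tfrac12)$. There is a unique $\omega_+>0$ such that $|\mu_-(i\omega)|>1$ for all $\omega\in(0,\omega_+)$ and $|\mu_-(i\omega)|<1$ for all $\omega>\omega_+$. Moreover $\omega_+$ is the unique positive solution of $|\mu_-(i\omega)|=1$, and $$\omega_+^2=(1-2\rho)|f|\left(\Bigl(1-\frac{|f|}{2g^2}\Bigr)(1-2\rho)+\sqrt{\Bigl(1-\frac{|f|}{2g^2}\Bigr)^2(1-2\rho)^2+\frac{2|f|}{g^2}}\right).$$
   Context: $\gamma(\nu)=\frac{f+g\nu-\nu^2}{f+g\nu}$; $\mu_\pm(\nu)=\frac{1}{2\rho}\left(\gamma(\nu)\pm\sqrt{\gamma(\nu)^2-4\rho(1-\rho)}\right)$, the two roots of $\rho\mu^2-\gamma\mu+(1-\rho)=0$. Branch convention: for $w\neq0$, $\sqrt w$ is the square root of $w$ whose argument lies in $[0,\pi)$ (branch cut along the positive real axis). In the final formula, the square root is the ordinary nonnegative square root of a positive real number. *)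

(* Defs.v *)
From Stdlib Require Import Reals Lra.
Open Scope R_scope.

Definition C : Type := (R * R)%type.
Definition Cre (z : C) : R := fst z.
Definition Cim (z : C) : R := snd z.
Definition RtoC (a : R) : C := (a, 0).
Definition Ci : C := (0, 1).
Definition Cadd (z w : C) : C := (Cre z + Cre w, Cim z + Cim w).
Definition Copp (z : C) : C := (- Cre z, - Cim z).
Definition Csub (z w : C) : C := Cadd z (Copp w).
Definition Cmul (z w : C) : C :=
  (Cre z * Cre w - Cim z * Cim w, Cre z * Cim w + Cim z * Cre w).
Definition Cinv (z : C) : C :=
  (Cre z / (Cre z ^ 2 + Cim z ^ 2), - Cim z / (Cre z ^ 2 + Cim z ^ 2)).
Definition Cdiv (z w : C) : C := Cmul z (Cinv w).
Definition Cmod (z : C) : R := sqrt (Cre z ^ 2 + Cim z ^ 2).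

(* Square root with branch cut along the positive real axis: for w <> 0,
   Csqrt w is the square root of w whose argument lies in [0, pi),
   i.e. Im >= 0, and Re > 0 when Im = 0.  Explicit formula:
   Re = sgn(Im w) * sqrt((|w| + Re w)/2)  (sgn taken as +1 when Im w >= 0),
   Im = sqrt((|w| - Re w)/2).  (Csqrt 0 = 0.) *)
Definition Csqrt (w : C) : C :=
  ((if Rle_dec 0 (Cim w) then 1 else -1) * sqrt ((Cmod w + Cre w) / 2),
   sqrt ((Cmod w - Cre w) / 2)).

Definition gamma (f g : R) (nu : C) : C :=
  Cdiv (Csub (Cadd (RtoC f) (Cmul (RtoC g) nu)) (Cmul nu nu))
       (Cadd (RtoC f) (Cmul (RtoC g) nu)).

Definition mu_minus (f g rho : R) (nu : C) : C :=
  let gm := gamma f g nu in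
  Cdiv (Csub gm (Csqrt (Csub (Cmul gm gm) (RtoC (4 * rho * (1 - rho))))))
       (RtoC (2 * rho)).

Definition iw (omega : R) : C := (0, omega).

(* Main.v *)
Require Import Defs.
From Stdlib Require Import Reals Lra Psatz.
Open Scope R_scope.

Lemma gamma_iw (f g w : R) : f < 0 ->
  gamma f g (iw w) = (1 + f*w^2/(f^2+g^2*w^2), -g*w^3/(f^2+g^2*w^2)).
Proof.
  intro hf. assert (hN : f^2 + g^2*w^2 <> 0) by nra.
  unfold gamma, Cdiv, Csub, Cadd, Cmul, Copp, Cinv, RtoC, iw, Cre, Cim; simpl.
  f_equal; field; nra.
Qed.

Lemma Csqrt_prop (u v : R) :
  let s := Csqrt (u, v) in
  fst s ^ 2 - snd s ^ 2 = u /\ 2 * fst s * snd s = v /\ 0 <= snd s /\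
  (0 < v -> 0 <= fst s) /\ (v < 0 -> fst s <= 0).
Proof.
  unfold Csqrt, Cmod, Cre, Cim; simpl.
  set (m := sqrt (u * (u * 1) + v * (v * 1))).
  assert (hm0 : 0 <= m) by apply sqrt_pos.
  assert (hm2 : m * m = u*u + v*v).
  { unfold m. rewrite sqrt_sqrt; nra. }
  assert (hmu : Rabs u <= m).
  { unfold Rabs; destruct (Rcase_abs u); nra. }
  assert (h1 : 0 <= (m + u)/2) by (unfold Rabs in hmu; destruct (Rcase_abs u); lra).
  assert (h2 : 0 <= (m - u)/2) by (unfold Rabs in hmu; destruct (Rcase_abs u); lra).
  pose proof (sqrt_sqrt _ h1) as e1. pose proof (sqrt_sqrt _ h2) as e2.
  pose proof (sqrt_pos ((m+u)/2)). pose proof (sqrt_pos ((m-u)/2)).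
  set (P := sqrt ((m+u)/2)) in *. set (Q := sqrt ((m-u)/2)) in *.
  assert (hPQ : (2*P*Q)^2 = v^2).
  { replace ((2*P*Q)^2) with (4*(P*P)*(Q*Q)) by ring. rewrite e1, e2. nra. }
  destruct (Rle_dec 0 v) as [hv|hv].
  - assert (0 <= 2*(1*P)*Q) by nra.
    repeat split; try lra; try (intros; nra).
  - assert (2*(-1*P)*Q <= 0) by nra.
    repeat split; try lra; try (intros; nra).
Qed.

Lemma sign_lemma (a b rho p q : R) : 0 < b -> 0 < rho < 1/2 ->
  p^2 - q^2 = a^2 - b^2 - 4*rho*(1-rho) -> p*q = a*b -> 0 <= q ->
  (0 < a -> 0 <= p) -> (a < 0 -> p <= 0) ->
  let x := (a-p)/(2*rho) in let y := (b-q)/(2*rho) in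
  let t := x^2 + y^2 in let e := (1-2*rho)^2 in
  (e*a^2+b^2-e > 0 -> t < 1) /\ (e*a^2+b^2-e < 0 -> t > 1) /\
  (e*a^2+b^2-e = 0 -> t = 1).
Proof.
  intros hb hr hpq hpq2 hq hp1 hp2 x y t e.
  set (c := 4*rho*(1-rho)) in *.
  assert (hc : 0 < c) by (unfold c; nra).
  assert (hq0 : 0 < q).
  { destruct hq as [hq|hq]; auto. subst q.
    assert (a = 0) by nra. subst a. nra. }
  assert (hap : 0 <= a*p).
  { destruct (Rtotal_order a 0) as [h|[h|h]].
    - specialize (hp2 h); nra.
    - subst; lra.
    - specialize (hp1 h); nra. }
  assert (hapbq : 0 < a*p + b*q) by nra.
  set (L := (a-p)^2+(b-q)^2).
  set (Rr := (a+p)^2+(b+q)^2).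
  assert (hLR : L*Rr = c^2).
  { replace (L*Rr) with ((a^2-b^2-(p^2-q^2))^2 + (2*a*b-2*(p*q))^2) by (unfold L, Rr; ring).
    rewrite hpq, hpq2. ring. }
  assert (hLlt : L < Rr) by (unfold L, Rr; nra).
  assert (hL0 : 0 <= L) by (unfold L; nra).
  assert (hLpos : 0 < L).
  { destruct hL0 as [h|h]; auto. rewrite <- h in hLR. nra. }
  assert (hLc : L < c) by nra.
  assert (ht : t = L / (4*rho^2)) by (unfold t, x, y, L; field; lra).
  assert (htpos : 0 < t) by (rewrite ht; apply Rdiv_lt_0_compat; nra).
  assert (htc : rho * t < 1 - rho).
  { rewrite ht. apply (Rmult_lt_reg_l (4*rho)); [lra|].
    replace (4*rho*(rho*(L/(4*rho^2)))) with L by (field; lra). unfold c in hLc. lra. }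
  assert (E1 : a*x - b*y - rho*(x^2-y^2) - (1-rho) = 0).
  { replace (a*x - b*y - rho*(x^2-y^2) - (1-rho)) with
      ((a^2-b^2-(p^2-q^2)-c)/(4*rho)) by (unfold x, y, c; field; lra).
    rewrite hpq. field. lra. }
  assert (E2 : a*y + b*x - 2*rho*x*y = 0).
  { replace (a*y + b*x - 2*rho*x*y) with ((2*(a*b) - 2*(p*q))/(4*rho))
      by (unfold x, y; field; lra).
    rewrite hpq2. field. lra. }
  assert (htd : t = x^2+y^2) by reflexivity.
  clearbody x y t. clear ht. subst t.
  assert (H1 : a*(x^2+y^2) = x*(rho*(x^2+y^2)+1-rho)).
  { assert (a*(x^2+y^2) - x*(rho*(x^2+y^2)+1-rho) =
       x*(a*x - b*y - rho*(x^2-y^2) - (1-rho)) + y*(a*y + b*x - 2*rho*x*y)) by ring.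
    rewrite E1, E2 in H. lra. }
  assert (H2 : b*(x^2+y^2) = y*(rho*(x^2+y^2)-(1-rho))).
  { assert (b*(x^2+y^2) - y*(rho*(x^2+y^2)-(1-rho)) =
       -y*(a*x - b*y - rho*(x^2-y^2) - (1-rho)) + x*(a*y + b*x - 2*rho*x*y)) by ring.
    rewrite E1, E2 in H. lra. }
  set (t := x^2+y^2) in *.
  assert (ID : t^2*(e*a^2+b^2-e) = (1-t)*((1-rho)^2-rho^2*t)*(e*x^2+y^2)).
  { replace (t^2*(e*a^2+b^2-e)) with (e*(a*t)^2+(b*t)^2-e*t^2) by ring.
    rewrite H1, H2. unfold t, e. ring. }
  assert (he : 0 < e) by (unfold e; nra). clearbody e.
  assert (hC : 0 < (1-rho)^2-rho^2*t) by nra.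
  assert (hZ : 0 < e*x^2+y^2).
  { unfold t in htpos. destruct (Rle_dec e 1).
    - assert (0 <= (1-e)*y^2) by (apply Rmult_le_pos; nra).
      assert (0 < e*(x^2+y^2)) by (apply Rmult_lt_0_compat; lra). nra.
    - assert (0 <= (e-1)*x^2) by (apply Rmult_le_pos; nra). nra. }
  assert (ht2 : 0 < t^2) by nra.
  set (C := (1-rho)^2-rho^2*t) in *. set (Z := e*x^2+y^2) in *.
  set (W := e*a^2+b^2-e) in *.
  assert (hCZ : 0 < C*Z) by nra.
  replace ((1-t)*C*Z) with ((1-t)*(C*Z)) in ID by ring.
  split; [|split]; intro hW.
  - nra.
  - nra.
  - rewrite hW in ID. assert ((1-t)*(C*Z) = 0) by lra.
    apply Rmult_integral in H. destruct H; lra.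
Qed.

Lemma mu_iw (f g rho w : R) : f < 0 -> 0 < rho ->
  let a := 1 + f*w^2/(f^2+g^2*w^2) in let b := -g*w^3/(f^2+g^2*w^2) in
  let s := Csqrt (a^2-b^2-4*rho*(1-rho), 2*a*b) in
  mu_minus f g rho (iw w) = ((a - fst s)/(2*rho), (b - snd s)/(2*rho)).
Proof.
  intros hf hr a b s.
  unfold mu_minus. rewrite gamma_iw by exact hf. fold a b.
  replace (Csub (Cmul (a, b) (a, b)) (RtoC (4 * rho * (1 - rho))))
    with (a^2-b^2-4*rho*(1-rho), 2*a*b)
    by (unfold Csub, Cmul, Cadd, Copp, RtoC, Cre, Cim; simpl; f_equal; ring).
  fold s. destruct s as [p q]. simpl.
  unfold Cdiv, Csub, Cmul, Cadd, Copp, Cinv, RtoC, Cre, Cim; simpl.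
  f_equal; field; lra.
Qed.

Lemma compare (f g rho w : R) : f < 0 -> g < 0 -> 0 < rho < 1/2 -> 0 < w ->
  let e := (1-2*rho)^2 in let X := w^2 in
  let P := g^2*X^2 + e*f*(2*g^2+f)*X + 2*f^3*e in
  (P > 0 -> Cmod (mu_minus f g rho (iw w)) < 1) /\
  (P < 0 -> Cmod (mu_minus f g rho (iw w)) > 1) /\
  (P = 0 -> Cmod (mu_minus f g rho (iw w)) = 1).
Proof.
  intros hf hg hr hw e X P.
  rewrite mu_iw by (auto; lra).
  set (N := f^2+g^2*w^2).
  assert (hN : 0 < N) by (unfold N; nra).
  set (a := 1 + f*w^2/N). set (b := -g*w^3/N).
  assert (hb : 0 < b).
  { unfold b. apply Rdiv_lt_0_compat; [|exact hN].
    assert (0 < w^3) by (apply pow_lt; lra). nra. }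
  destruct (Csqrt_prop (a^2-b^2-4*rho*(1-rho)) (2*a*b)) as [h1 [h2 [h3 [h4 h5]]]].
  destruct (Csqrt (a^2-b^2-4*rho*(1-rho), 2*a*b)) as [p q]. cbn [fst snd] in *.
  assert (hs := sign_lemma a b rho p q hb hr ltac:(lra) ltac:(lra) h3
     ltac:(intro; apply h4; nra) ltac:(intro; apply h5; nra)).
  cbv zeta in hs. fold e in hs.
  assert (hrel : (e*a^2+b^2-e)*N^2 = X*P).
  { unfold P, X, a, b, e. unfold N in *. field. lra. }
  assert (hX : 0 < X) by (unfold X; nra).
  assert (hN2 : 0 < N^2) by nra.
  unfold Cmod, Cre, Cim; simpl.
  set (t := ((a - p) / (2 * rho)) ^ 2 + ((b - q) / (2 * rho)) ^ 2) in *.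
  replace (((a - p) / (2 * rho)) * (((a - p) / (2 * rho)) * 1) +
           ((b - q) / (2 * rho)) * (((b - q) / (2 * rho)) * 1)) with t by (unfold t; ring).
  destruct hs as [s1 [s2 s3]].
  assert (ht0 : 0 <= t) by (unfold t; apply Rplus_le_le_0_compat; apply pow2_ge_0).
  split; [|split]; intro hP.
  - assert (t < 1) by (apply s1; nra).
    rewrite <- sqrt_1. apply sqrt_lt_1_alt. lra.
  - assert (t > 1) by (apply s2; nra).
    rewrite <- sqrt_1. apply sqrt_lt_1_alt. lra.
  - assert (t = 1) by (apply s3; rewrite hP in hrel; nra).
    rewrite H. apply sqrt_1.
Qed.

Theorem mainTheorem11 (f g rho : R) (hf : f < 0) (hg : g < 0)
  (hrho : 0 < rho < 1 / 2) :
  exists omp : R,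
    (0 < omp /\
     (forall w, 0 < w < omp -> Cmod (mu_minus f g rho (iw w)) > 1) /\
     (forall w, w > omp -> Cmod (mu_minus f g rho (iw w)) < 1)) /\
    (forall omp' : R,
       0 < omp' ->
       (forall w, 0 < w < omp' -> Cmod (mu_minus f g rho (iw w)) > 1) ->
       (forall w, w > omp' -> Cmod (mu_minus f g rho (iw w)) < 1) ->
       omp' = omp) /\
    (forall w, 0 < w -> (Cmod (mu_minus f g rho (iw w)) = 1 <-> w = omp)) /\
    omp ^ 2 =
      (1 - 2 * rho) * Rabs f *
      ((1 - Rabs f / (2 * g ^ 2)) * (1 - 2 * rho) +
       sqrt ((1 - Rabs f / (2 * g ^ 2)) ^ 2 * (1 - 2 * rho) ^ 2
             + 2 * Rabs f / g ^ 2)).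
Proof.
  set (F := Rabs f).
  assert (hF : F = - f) by (unfold F; apply Rabs_left; exact hf).
  set (al := 1 - F / (2 * g ^ 2)).
  set (r := sqrt (al ^ 2 * (1 - 2 * rho) ^ 2 + 2 * F / g ^ 2)).
  assert (hg2 : 0 < g^2) by nra.
  assert (hFg : 0 < 2 * F / g^2) by (apply Rdiv_lt_0_compat; lra).
  assert (hr0 : 0 <= r) by apply sqrt_pos.
  assert (hr2 : r * r = al ^ 2 * (1 - 2 * rho) ^ 2 + 2 * F / g ^ 2).
  { apply sqrt_sqrt. assert (0 <= al^2 * (1-2*rho)^2) by
      (apply Rmult_le_pos; apply pow2_ge_0). lra. }
  set (Xp := (1 - 2 * rho) * F * (al * (1 - 2 * rho) + r)).
  set (Xm := (1 - 2 * rho) * F * (al * (1 - 2 * rho) - r)).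
  assert (hk : 0 < (1 - 2*rho) * F) by nra.
  set (z := al * (1 - 2*rho)) in *.
  assert (hr2' : r*r = z^2 + 2*F/g^2) by (rewrite hr2; unfold z; ring).
  assert (hz1 : 0 < z + r) by nra.
  assert (hz2 : z - r < 0) by nra.
  assert (hXp : 0 < Xp) by (unfold Xp; nra).
  assert (hXm : Xm < 0) by (unfold Xm; nra).
  assert (HP : forall X, g^2*X^2 + (1-2*rho)^2*f*(2*g^2+f)*X + 2*f^3*(1-2*rho)^2
                        = g^2*(X-Xp)*(X-Xm)).
  { intro X.
    transitivity (g^2*(X^2 - 2*((1-2*rho)*F)*z*X + ((1-2*rho)*F)^2*z^2
                       - ((1-2*rho)*F)^2*(r*r))).
    - rewrite hr2. unfold z, al. rewrite hF. field. lra.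
    - unfold Xp, Xm. ring. }
  clearbody Xp Xm.
  assert (Hcmp : forall w, 0 < w ->
     (w^2 > Xp -> Cmod (mu_minus f g rho (iw w)) < 1) /\
     (w^2 < Xp -> Cmod (mu_minus f g rho (iw w)) > 1) /\
     (w^2 = Xp -> Cmod (mu_minus f g rho (iw w)) = 1)).
  { intros w hw. destruct (compare f g rho w hf hg hrho hw) as [c1 [c2 c3]].
    cbv zeta in c1, c2, c3. rewrite HP in c1, c2, c3.
    assert (0 < w^2 - Xm) by nra.
    split; [|split]; intro h.
    - apply c1. apply Rmult_lt_0_compat; [|lra]. apply Rmult_lt_0_compat; lra.
    - apply c2. assert (0 < g^2*(Xp - w^2)*(w^2-Xm)).
      { apply Rmult_lt_0_compat; [|lra]. apply Rmult_lt_0_compat; lra. }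
      nra.
    - apply c3. rewrite h. ring. }
  exists (sqrt Xp).
  assert (hs0 : 0 < sqrt Xp) by (apply sqrt_lt_R0; lra).
  assert (hs2 : sqrt Xp ^ 2 = Xp) by (apply pow2_sqrt; lra).
  assert (Hlt : forall w, 0 < w < sqrt Xp -> Cmod (mu_minus f g rho (iw w)) > 1).
  { intros w hw. apply (Hcmp w ltac:(lra)). nra. }
  assert (Hgt : forall w, w > sqrt Xp -> Cmod (mu_minus f g rho (iw w)) < 1).
  { intros w hw. apply (Hcmp w ltac:(lra)). nra. }
  split; [|split; [|split]].
  - split; [exact hs0|split; assumption].
  - intros o ho H1 H2.
    destruct (Rtotal_order o (sqrt Xp)) as [h|[h|h]]; auto.
    + exfalso. set (m := (o + sqrt Xp)/2).
      assert (A1 := H2 m ltac:(unfold m; lra)).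
      assert (A2 := Hlt m ltac:(unfold m; lra)). lra.
    + exfalso. set (m := (o + sqrt Xp)/2).
      assert (A1 := H1 m ltac:(unfold m; lra)).
      assert (A2 := Hgt m ltac:(unfold m; lra)). lra.
  - intros w hw. split.
    + intro H. destruct (Rtotal_order w (sqrt Xp)) as [h|[h|h]]; auto.
      * assert (A := Hlt w ltac:(lra)). lra.
      * assert (A := Hgt w ltac:(lra)). lra.
    + intro h. subst w. apply (Hcmp _ hs0). exact hs2.
  - rewrite hs2. reflexivity.
Qed.
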